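(* Let $G$ be a finite chordal graph and let $t\ge 0$ be an integer. Then $\hat\beta_t(G)=1$.
   Context: All graphs are finite and simple. For an integer $t\ge 0$, a graph $H$ is a $t$-shallow minor ($t$-minor) of a graph $G$ if $H$ can be obtained from $G$ by contracting pairwise vertex-disjoint connected subgraphs, each of radius at most $t$, into single vertices and deleting vertices (but not edges). Equivalently, there are pairwise disjoint sets $V_v\subseteq V(G)$, $v\in V(H)$, each inducing a connected subgraph of $G$ of radius at most $t$, such that $uv\in E(H)$ if and only if some edge of $G$ joins $V_u$ and $V_v$. In particular every induced subgraph of $G$ is a $t$-minor of $G$. For a graph $H$, $\beta(H)$ denotes the clique cover number of $H$: the minimum number of cliques partitioning $V(H)$. For $x\in V(H)$, $H_x$ denotes the subgraph of $H$ induced by the closed neighborhood $N_H[x]=\{x\}\cup N_H(x)$. Define $\tilde\beta(H)=\min_{x\in V(H)}\beta(H_x)$, and $\hat\beta_t(G)=\max\{\tilde\beta(H): H \text{ a nonempty } t\text{-minor of } G\}$ (the largest reduced neighborhood clique cover number of $G$). A graph is chordal if it has no induced cycle of length at least $4$. *)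

(* Defs.v *)
(* Simple graphs are symmetric irreflexive relations on a finType. *)
From mathcomp Require Import all_boot.
Set Implicit Arguments. Unset Strict Implicit. Unset Printing Implicit Defensive.

Section Graphs.
Variable V : finType.
Variable e : rel V.

Definition is_clique (K : {set V}) : bool :=
  [forall x in K, forall y in K, (x != y) ==> e x y].

(* beta of the induced subgraph on S: minimum number of cliques partitioning S.
   (The partition into singletons shows the minimum is at most #|S|.) *)
Definition clique_cover_number (S : {set V}) : nat :=
  \big[minn/#|S|]_(P : {set {set V}} | partition P S && [forall K in P, is_clique K]) #|P|.

Definition closed_nbhd (S : {set V}) (x : V) : {set V} :=
  [set y in S | (y == x) || e x y].

(* tilde beta of the induced subgraph on S (meaningful for S nonempty) *)
Definition reduced_nbhd_ccn (S : {set V}) : nat :=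
  \big[minn/#|S|]_(x in S) clique_cover_number (closed_nbhd S x).
End Graphs.

Section Minors.
Variable T : finType.
Variable e : rel T.

Definition radius_le (t : nat) (A : {set T}) : bool :=
  [exists c in A, forall y in A, exists n : 'I_t.+1, exists s : n.-tuple T,
     path (fun u v => e u v && (v \in A)) c s && (last c s == y)].

Definition shallow_family (t : nat) (P : {set {set T}}) : bool :=
  trivIset P && [forall A in P, radius_le t A].

(* The t-minor obtained from the branch-set family P: vertices are the
   members of P, two distinct branch sets adjacent iff some G-edge joins them. *)
Definition minor_rel : rel {set T} :=
  fun A B => (A != B) && [exists x in A, exists y in B, e x y].

(* hat beta_t(G): max of tilde beta over all nonempty t-minors of G
   (each t-minor is isomorphic to the one built from its branch sets). *)
Definition hat_beta (t : nat) : nat :=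
  \max_(P : {set {set T}} | shallow_family t P && (P != set0))
     reduced_nbhd_ccn minor_rel P.

Definition chordal : Prop :=
  forall (k : nat) (f : 'I_k -> T), 4 <= k -> injective f ->
    ~ (forall i j : 'I_k, e (f i) (f j) = ((i.+1 %% k == j) || (j.+1 %% k == i))).
End Minors.

(* Main.v *)
Require Import Defs.
From mathcomp Require Import all_boot.
From mathcomp Require Import zify.
Set Implicit Arguments. Unset Strict Implicit. Unset Printing Implicit Defensive.


Section Paths.
Variable T : finType.
Variable e : rel T.
Hypothesis esym : symmetric e.
Hypothesis eirr : irreflexive e.

Fixpoint chordless (s : seq T) : bool :=
  match s with
  | [::] => true
  | a :: s' => [&& a \notin s', (if s' is b :: r then e a b && all (fun z => ~~ e a z) r else true)
                  & chordless s']
  end.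

Lemma chordless_uniq s : chordless s -> uniq s.
Proof. by elim: s => //= a s IH /and3P[-> _ /IH]. Qed.

Lemma chordless_idx s x0 : chordless s -> forall i j, i < size s -> j < size s ->
  e (nth x0 s i) (nth x0 s j) = (i.+1 == j) || (j.+1 == i).
Proof.
elim: s => //= a s IH /and3P[_ H2 /IH {}IH].
have key : forall j, j < size s -> e a (nth x0 s j) = (j == 0).
  move=> j; case: s H2 {IH} => //= b r /andP[eab /allP hr].
  case: j => [|j] //= ltj; apply/negbTE/hr; exact: mem_nth.
case=> [|i] [|j] //= hi hj.
- by rewrite key // eqSS orbF.
- by rewrite esym key // eqSS.
- by rewrite IH // !eqSS.
Qed.

Lemma shortcut n x s : size s <= n -> path e x s ->
  exists s', [/\ chordless (x :: s'), last x s' = last x s & {subset s' <= s}].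
Proof.
elim: n x s => [|n IH] x [|a r] //=.
- by move=> _ _; exists [::].
- by move=> _ _; exists [::].
rewrite ltnS => hs /andP[exa pr].
have [/hasP[z zr /orP[exz|/eqP zx]]|nh] := boolP (has (fun z => e x z || (z == x)) r).
- move: zr pr hs; case/splitPr=> r1 r2; rewrite cat_path /= => /and3P[_ _ pz] hs.
  have hsz : size (z :: r2) <= n by rewrite size_cat /= in hs *; lia.
  have [s' [h1 h2 h3]] := IH x (z :: r2) hsz (introT andP (conj exz pz)).
  exists s'; split => //.
    by rewrite h2 /= last_cat.
  move=> w /h3; rewrite !inE mem_cat /= inE => ->; rewrite !orbT.
  done.
- move: zr pr hs; rewrite zx; case/splitPr=> r1 r2; rewrite cat_path /= => /and3P[_ _ pz] hs.
  have hsz : size r2 <= n by rewrite size_cat /= in hs *; lia.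
  have [s' [h1 h2 h3]] := IH x r2 hsz pz.
  exists s'; split => //.
    by rewrite h2 /= last_cat.
  move=> w /h3 wr; rewrite inE mem_cat /= inE wr !orbT.
  done.
- have [s'' [h1 h2 h3]] := IH a r hs pr.
  exists (a :: s''); split => //=.
  move: h1 => /= /and3P[-> -> ->]; rewrite exa !andbT inE negb_or.
  have xa : x != a by apply/eqP => xa; rewrite xa eirr in exa.
  rewrite xa /=.
  apply/andP; split.
    apply/negP => /h3 xr; move/hasPn: nh => /(_ x xr); by rewrite eqxx orbT.
  apply/allP => w /h3 wr; move/hasPn: nh => /(_ w wr); by rewrite negb_or => /andP[].
  move=> w; rewrite !inE => /orP[->//|/h3 ->]; by rewrite orbT.
Qed.

Lemma cycle_contra q u : chordal e -> chordless q -> 3 <= size q -> u \notin q ->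
  (forall i, i < size q -> e u (nth u q i) = (i == 0) || (i == (size q).-1)) -> False.
Proof.
move=> chd cq sq uq hu.
set m := size q.
pose cyc := rcons q u.
have scyc : size cyc = m.+1 by rewrite size_rcons.
pose f := fun i : 'I_m.+1 => nth u cyc i.
apply: (chd m.+1 f); first by lia.
- move=> i j /eqP; rewrite /f nth_uniq ?scyc //; first by move/eqP/val_inj.
  by rewrite rcons_uniq uq chordless_uniq.
- move=> [i hi] [j hj]; rewrite /f /= !nth_rcons -/m.
  have idx := chordless_idx u cq.
  have mi : i.+1 %% m.+1 = if i == m then 0 else i.+1.
    case: eqP => [->|ne]; first by rewrite modnn.
    by rewrite modn_small //; lia.
  have mj : j.+1 %% m.+1 = if j == m then 0 else j.+1.
    case: eqP => [->|ne]; first by rewrite modnn.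
    by rewrite modn_small //; lia.
  rewrite mi mj.
  case: (ltnP i m) => im; case: (ltnP j m) => jm.
  + rewrite idx //. have -> : (i == m) = false by lia. by have -> : (j == m) = false by lia.
  + have -> : j = m by lia. rewrite eqxx esym hu //.
    have -> : (i == m) = false by lia.
    rewrite -/m; lia.
  + have -> : i = m by lia. rewrite eqxx hu //.
    have -> : (j == m) = false by lia.
    rewrite -/m; lia.
  + have -> : i = m by lia. have -> : j = m by lia. rewrite eqxx eirr.
    lia.
Qed.
End Paths.


Section Simp.
Variable T : finType.
Variable e : rel T.
Hypothesis esym : symmetric e.
Hypothesis eirr : irreflexive e.
Hypothesis chd : chordal e.

Definition simplicial (U : {set T}) z :=
  z \in U /\ forall x y, x \in U -> y \in U -> x != y -> e z x -> e z y -> e x y.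

Definition Bprop (U : {set T}) := forall u c0, u \in U -> c0 \in U -> c0 != u -> ~~ e u c0 ->
  exists z, [/\ z \in U, z != u, ~~ e u z & simplicial U z].

Lemma A_of_B U : Bprop U -> U != set0 -> exists z, simplicial U z.
Proof.
move=> hB /set0Pn[z0 z0U].
have [/existsP[x /andP[xU /existsP[y /and3P[yU yx nxy]]]]|hn] :=
  boolP [exists x in U, exists y in U, (y != x) && ~~ e x y].
  by have [z [_ _ _ hz]] := hB x y xU yU yx nxy; exists z.
exists z0; split => // x y xU yU xy _ _.
move/existsPn: hn => /(_ x); rewrite xU /= => /existsPn /(_ y); rewrite yU /=.
by rewrite negb_and !negbK eq_sym (negbTE xy).
Qed.

Lemma B_all n (U : {set T}) : #|U| <= n -> Bprop U.
Proof.
elim: n U => [|n IHn] U.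
  move=> hU u c0 uU; move: hU; rewrite leqn0 => /eqP/cards0_eq hU.
  by rewrite hU inE in uU.
move=> hU u c0 uU c0U c0u nuc0.
pose R := [set z in U | (z != u) && ~~ e u z].
have hR z : z \in R = [&& z \in U, z != u & ~~ e u z] by rewrite inE.
pose rel' := [rel a b | [&& e a b, a \in R & b \in R]].
have symr : symmetric rel'.
  by move=> a b /=; rewrite esym; case: (a \in R); case: (b \in R); rewrite ?andbF ?andbT.
have csym := sym_connect_sym symr.
pose C := [set z | connect rel' c0 z].
have c0R : c0 \in R by rewrite hR c0U c0u.
have pathR : forall c p, path rel' c p -> c \in R -> last c p \in R.
  by move=> c p; elim: p c => //= a p IH c /andP[/and3P[_ _ aR] pp] _; apply: IH.
have CR : forall z, z \in C -> z \in R.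
  by move=> z; rewrite inE => /connectP[p pp ->]; apply: pathR.
have c0C : c0 \in C by rewrite inE connect0.
have Cstep : forall z w, z \in C -> rel' z w -> w \in C.
  move=> z w hz hzw; rewrite inE; move: hz; rewrite inE => hz. apply: (connect_trans hz); exact: connect1.
have CU : forall z, z \in C -> z \in U by move=> z /CR; rewrite hR => /and3P[].
pose S := [set s in U | (s \notin C) && [exists c in C, e s c]].
pose W := C :|: S.
have FactN : forall c z, c \in C -> z \in U -> e c z -> z \in W.
  move=> c z cC zU ecz; rewrite inE; case: (boolP (z \in C)) => //= zC.
  rewrite inE zU zC /=; apply/existsP; exists c; by rewrite cC esym.
have SU : forall s, s \in S -> e u s.
  move=> s; rewrite inE => /and3P[sU sC /existsP[c /andP[cC esc]]].
  have cR := CR _ cC.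
  case: (boolP (s \in R)) => sR.
    by have := Cstep c s cC; rewrite /= esym esc cR sR => /(_ isT) sC'; rewrite sC' in sC.
  move: sR; rewrite hR sU /= negb_and negbK => /orP[/eqP su|/negPn ->//].
    by move: cR; rewrite hR -su esc !andbF.
have Sclique : forall x y, x \in S -> y \in S -> x != y -> e x y.
  move=> x y xS yS xy; apply/negPn/negP => nxy.
  have exu := SU x xS; have eyu := SU y yS.
  move: (xS) (yS); rewrite !inE => /and3P[xU xC /existsP[a /andP[aC exa]]]
    /and3P[yU yC /existsP[b /andP[bC eyb]]].
  have : connect rel' a b.
    apply: connect_trans (_ : connect rel' a c0) _.
      by rewrite csym; move: aC; rewrite inE.
    by move: bC; rewrite inE.
  move=> /connectP[p pp pb].
  have allC : forall c q, path rel' c q -> c \in C -> forall w, w \in c :: q -> w \in C.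
    move=> c q; elim: q c => [|d q IH] c /=.
      by move=> _ cC w; rewrite inE => /eqP->.
    move=> /andP[rcd pq] cC w; rewrite inE => /orP[/eqP->//|].
    by apply: IH => //; apply: Cstep rcd.
  pose s := a :: rcons p y.
  have ps : path e x s.
    rewrite /= exa rcons_path -pb esym eyb andbT.
    by apply: sub_path pp => c d /andP[].
  have smem : forall w, w \in s -> (w \in C) || (w == y).
    move=> w; rewrite /s -cats1 -cat_cons mem_cat => /orP[/(allC _ _ pp aC)->//|]; rewrite inE => ->.
    by rewrite orbT.
  have [s' [h1 h2 h3]] := shortcut eirr (leqnn (size s)) ps.
  have ly : last x s' = y by rewrite h2 /s /= last_rcons.
  have uq := chordless_uniq h1.
  have yu : y != u by apply/eqP => yu; rewrite yu eirr in eyu.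
  have s'C : forall w, w \in s' -> w != y -> w \in C.
    by move=> w /h3 /smem /orP[->//|->].
  case: s' h1 h2 h3 ly uq s'C => [|w1 s'] h1 h2 h3 ly uq s'C.
    by move: ly xy => /= ->; rewrite eqxx.
  case: s' h1 h2 h3 ly uq s'C => [|w2 s'] h1 h2 h3 ly uq s'C.
    by move: ly h1 => /= ->; rewrite (negbTE nxy) !andbF.
  apply: (cycle_contra esym eirr (q := [:: x, w1, w2 & s']) (u := u) chd h1) => //.
  - rewrite !inE negb_or; apply/andP; split.
      by apply/eqP => ux; rewrite -ux eirr in exu.
    apply/negP => us'; case: (eqVneq u y) => [uy|uy].
      by rewrite uy eqxx in yu.
    by have := CR _ (s'C u us' uy); rewrite hR eqxx andbF.
  - move=> i hi.
    set q := [:: x, w1, w2 & s'] in hi *.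
    have lq : nth u q (size q).-1 = y by rewrite nth_last /q /= -ly.
    case: i hi => [|i] hi; first by rewrite /= exu.
    case: (eqVneq i.+1 (size q).-1) => [->|ne].
      by rewrite lq eyu orbT.
    have hin : nth u q i.+1 \in [:: w1, w2 & s'].
      rewrite /q /=; apply: mem_nth; exact: hi.
    have ny : nth u q i.+1 != y.
      by rewrite -lq (nth_uniq u hi (leqnn _) uq).
    have nz : ~~ e u (nth u q i.+1) by have := CR _ (s'C _ hin ny); rewrite hR => /and3P[].
    by rewrite (negbTE nz).
have uC : u \notin C by apply/negP => /CR; rewrite hR eqxx andbF.
have uS : u \notin S.
  rewrite inE negb_and negb_and uC /=; apply/orP; right; apply/existsPn => c.
  rewrite negb_and; case: (boolP (c \in C)) => //= cC.
  by have := CR _ cC; rewrite hR esym => /and3P[_ _ ->].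
have WU : W \subset U.
  apply/subsetP => z; rewrite inE => /orP[/CU//|]; by rewrite inE => /andP[].
have WltU : #|W| <= n.
  have : W \proper U by apply/properP; split => //; exists u => //; rewrite inE negb_or uC.
  by move/proper_card; lia.
have CltU : #|C| <= n.
  have : C \proper U.
    apply/properP; split; last by exists u.
    by apply/subsetP => z /CU.
  by move/proper_card; lia.
have [/existsP[s /andP[sS /existsP[w /and3P[wW ws nsw]]]]|H2] :=
  boolP [exists s in S, exists w in W, (w != s) && ~~ e s w].
- have sW : s \in W by rewrite inE sS orbT.
  have [z [zW zs nsz [_ simz]]] := IHn W WltU s w sW wW ws nsw.
  have zC : z \in C.
    move: zW; rewrite inE => /orP[//|zS].
    by rewrite (Sclique s z sS zS) // eq_sym in nsz.
  have := CR _ zC; rewrite hR => /and3P[zU zu nuz].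
  exists z; split => //; split => // x y xU yU xy ezx ezy.
  by apply: simz => //; apply: FactN ezx + apply: FactN ezy.
- have H2' : forall s w, s \in S -> w \in W -> w != s -> e s w.
    move=> s w sS wW ws; move/existsPn: H2 => /(_ s); rewrite sS /= => /existsPn /(_ w).
    by rewrite wW ws /= negbK.
  have Cn0 : C != set0 by apply/set0Pn; exists c0.
  have [z [zC simz]] := A_of_B (IHn C CltU) Cn0.
  have := CR _ zC; rewrite hR => /and3P[zU zu nuz].
  exists z; split => //; split => // x y xU yU xy ezx ezy.
  have xW := FactN _ _ zC xU ezx; have yW := FactN _ _ zC yU ezy.
  case: (boolP (x \in S)) => xS; first by apply: H2' => //; rewrite eq_sym.
  case: (boolP (y \in S)) => yS; first by rewrite esym; apply: H2'.
  have xC : x \in C by move: xW xS; rewrite inE => /orP[->|->].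
  have yC : y \in C by move: yW yS; rewrite inE => /orP[->|->].
  exact: simz.
Qed.

Lemma simplicial_exists U : U != set0 -> exists z, simplicial U z.
Proof. exact: A_of_B (B_all (leqnn _)). Qed.
End Simp.


Section Minor.
Variable T : finType.
Variable e : rel T.
Hypothesis esym : symmetric e.
Hypothesis eirr : irreflexive e.
Hypothesis chd : chordal e.

Definition adj (A B : {set T}) := [exists x in A, exists y in B, e x y].
Definition cutconn (A : {set T}) := forall X : {set T}, X \subset A -> X != set0 -> X != A ->
  exists x y, [/\ x \in X, y \in A, y \notin X & e x y].

Lemma adj_sym A B : adj A B = adj B A.
Proof.
by apply/idP/idP => /existsP[x /andP[xA /existsP[y /andP[yB exy]]]];
  apply/existsP; exists y; rewrite yB /=; apply/existsP; exists x; rewrite xA esym.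
Qed.

Lemma cutconn_del (U A : {set T}) v : A \subset U -> simplicial e U v -> v \in A ->
  cutconn A -> A :\ v != set0 -> cutconn (A :\ v).
Proof.
move=> AU [vU simv] vA cA nA X XA' Xn0 XnA'.
have XA : X \subset A by apply: subset_trans XA' (subsetDl _ _).
have vX : v \notin X by apply/negP => /(subsetP XA'); rewrite !inE eqxx.
have XnA : X != A by apply/eqP => XA0; move: vX; rewrite XA0 vA.
have [x [y [xX yA yX exy]]] := cA X XA Xn0 XnA.
case: (eqVneq y v) => [yv|yv].
- have [z zA' zX] : exists2 z, z \in A :\ v & z \notin X.
    apply/exists_inP; move: XnA'; rewrite eqEsubset XA' /= => /subsetPn[z zA zX].
    by apply/exists_inP; exists z.
  have Xv_sub : X :|: [set v] \subset A by rewrite subUset XA sub1set vA.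
  have Xvn0 : X :|: [set v] != set0 by apply/set0Pn; exists v; rewrite !inE eqxx orbT.
  have XvnA : X :|: [set v] != A.
    apply/eqP => h; move: zA'; rewrite -h !inE => /andP[/negbTE -> /=].
    by rewrite (negbTE zX).
  have [x2 [y2 [x2X y2A y2X e2]]] := cA _ Xv_sub Xvn0 XvnA.
  have y2X' : y2 \notin X by move: y2X; rewrite inE negb_or => /andP[].
  have y2v : y2 != v by move: y2X; rewrite !inE negb_or => /andP[_].
  have y2A' : y2 \in A :\ v by rewrite !inE y2v.
  move: x2X; rewrite !inE => /orP[x2X|/eqP x2v].
    by exists x2, y2.
  exists x, y2; split => //.
  have xU : x \in U by apply: (subsetP (subset_trans XA AU)).
  have y2U : y2 \in U by apply: (subsetP AU).
  apply: simv => //.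
  + by apply/eqP => h; move: y2X'; rewrite -h xX.
  + by rewrite -yv esym.
  + by rewrite -x2v.
- by exists x, y; split => //; rewrite !inE yv.
Qed.

Lemma family_simp (I : finType) (J : {set I}) n (g : I -> {set T}) :
  \sum_(i in J) #|g i| <= n -> J != set0 ->
  (forall i, i \in J -> g i != set0 /\ cutconn (g i)) ->
  (forall i j, i \in J -> j \in J -> i != j -> [disjoint g i & g j]) ->
  exists i0, i0 \in J /\ forall j k, j \in J -> k \in J -> j != i0 -> k != i0 -> j != k ->
    adj (g i0) (g j) -> adj (g i0) (g k) -> adj (g j) (g k).
Proof.
elim: n g => [|n IH] g hs Jn0 hg hd.
  move/set0Pn: Jn0 => [i iJ]; have [/set0Pn[x xg] _] := hg i iJ.
  move: hs; rewrite (bigD1 i) //= leqn0 addn_eq0 => /andP[/eqP h _].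
  by move/eqP: h; rewrite cards_eq0 => /eqP h; rewrite h inE in xg.
pose U := \bigcup_(i in J) g i.
have dmem : forall i j x, i \in J -> j \in J -> x \in g i -> x \in g j -> i = j.
  move=> i j x iJ jJ xi xj; apply/eqP/negPn/negP => ij.
  by rewrite (disjointFr (hd i j iJ jJ ij) xi) in xj.
have gU : forall i, i \in J -> g i \subset U.
  by move=> i iJ; apply/subsetP => x xi; apply/bigcupP; exists i.
have Un0 : U != set0.
  move/set0Pn: Jn0 => [i iJ]; have [/set0Pn[x xg] _] := hg i iJ.
  by apply/set0Pn; exists x; apply/bigcupP; exists i.
have [v [vU simv]] := simplicial_exists esym eirr chd Un0.
move/bigcupP: (vU) => [i0 i0J vi0].
have [gi0n0 cc0] := hg i0 i0J.
case: (eqVneq (g i0 :\ v) set0) => [A'0|A'n0].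
  exists i0; split => // j k jJ kJ ji kI jk /existsP[x /andP[xi /existsP[y /andP[yj exy]]]]
    /existsP[x' /andP[x'i /existsP[z /andP[zk exz]]]].
  have xv : x = v by apply/eqP/negPn/negP => xv; move: A'0 => /setP/(_ x); rewrite !inE xv xi.
  have x'v : x' = v by apply/eqP/negPn/negP => x'v; move: A'0 => /setP/(_ x'); rewrite !inE x'v x'i.
  apply/existsP; exists y; rewrite yj /=; apply/existsP; exists z; rewrite zk /=.
  apply: simv.
  - by apply: (subsetP (gU j jJ)).
  - by apply: (subsetP (gU k kJ)).
  - by apply/eqP => yz; rewrite -yz in zk; move: jk; rewrite (dmem j k y jJ kJ yj zk) eqxx.
  - by rewrite -xv.
  - by rewrite -x'v.
have [w [wA' evw]] : exists w, w \in g i0 :\ v /\ e v w.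
  have s1 : [set v] \subset g i0 by rewrite sub1set.
  have n1 : [set v] != set0 by apply/set0Pn; exists v; rewrite inE.
  have ne1 : [set v] != g i0.
    apply/eqP => h; move/set0Pn: A'n0 => [a]; rewrite -h !inE => /andP[/negbTE ->].
    by [].
  have [x [y [xv yA yv exy]]] := cc0 _ s1 n1 ne1.
  move: xv; rewrite inE => /eqP xv; exists y; split; last by rewrite -xv.
  by rewrite !inE; move: yv; rewrite inE => ->.
pose g' := fun i => if i == i0 then g i0 :\ v else g i.
have key : forall j, j \in J -> j != i0 -> adj (g i0 :\ v) (g j) = adj (g i0) (g j).
  move=> j jJ ji; apply/idP/idP => /existsP[x /andP[xi /existsP[y /andP[yj exy]]]].
    apply/existsP; exists x; move: xi; rewrite !inE => /andP[_ ->] /=.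
    by apply/existsP; exists y; rewrite yj.
  case: (eqVneq x v) => [xv|xv].
    apply/existsP; exists w; rewrite wA' /=; apply/existsP; exists y; rewrite yj /=.
    move: wA'; rewrite !inE => /andP[_ wi].
    apply: simv => //.
    - by apply: (subsetP (gU i0 i0J)).
    - by apply: (subsetP (gU j jJ)).
    - apply/eqP => wy; rewrite -wy in yj; move: ji; by rewrite (dmem j i0 w jJ i0J yj wi) eqxx.
    - by rewrite -xv.
  apply/existsP; exists x; rewrite !inE xv xi /=.
  by apply/existsP; exists y; rewrite yj.
have adjeq : forall a b, a \in J -> b \in J -> a != b -> adj (g' a) (g' b) = adj (g a) (g b).
  move=> a b aJ bJ ab; rewrite /g'.
  case: (eqVneq a i0) => [ai|ai]; case: (eqVneq b i0) => [bi|bi].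
  - by rewrite ai bi eqxx in ab.
  - by rewrite ai key.
  - by rewrite adj_sym key // adj_sym bi.
  - by [].
have hs' : \sum_(i in J) #|g' i| <= n.
  have E : \sum_(i in J) #|g' i| = #|g i0 :\ v| + \sum_(i in J | i != i0) #|g i|.
    rewrite (bigD1 i0) //= /g' eqxx; congr (_ + _); apply: eq_bigr => i /andP[_ /negbTE ->] //.
  by move: hs; rewrite (bigD1 i0) //= (cardsD1 v (g i0)) vi0 E add1n addSn ltnS.
have hg' : forall i, i \in J -> g' i != set0 /\ cutconn (g' i).
  move=> i iJ; case: (eqVneq i i0) => [ii|ii]; last by rewrite /g' (negbTE ii); exact: hg i iJ.
  rewrite /g' ii eqxx; split => //; apply: cutconn_del (gU i0 i0J) _ vi0 cc0 A'n0; by split.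
have hd' : forall i j, i \in J -> j \in J -> i != j -> [disjoint g' i & g' j].
  move=> i j iJ jJ ij; rewrite /g'.
  case: (eqVneq i i0) => [ii|ii]; case: (eqVneq j i0) => [ji|ji].
  - by rewrite ii ji eqxx in ij.
  - apply: disjointWl (subsetDl _ _) _; rewrite -ii; exact: hd.
  - apply: disjointWr (subsetDl _ _) _; rewrite -ji; exact: hd.
  - exact: hd.
have [i1 [i1J hs2]] := IH g' hs' Jn0 hg' hd'.
exists i1; split => // j k jJ kJ ji ki jk a1 a2.
rewrite -adjeq //; apply: hs2 => //; rewrite adjeq // eq_sym //.
Qed.
End Minor.


Section Final.
Variable T : finType.
Variable e : rel T.
Hypothesis esym : symmetric e.

Lemma crossing (r : rel T) (Q : pred T) c s : path r c s -> Q c -> ~~ Q (last c s) ->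
  exists x y, [/\ x \in c :: s, Q x, ~~ Q y & r x y].
Proof.
elim: s c => [|a s IH] c /=; first by move=> _ ->.
move=> /andP[rca ps] Qc Ql.
case: (boolP (Q a)) => Qa.
  have [x [y [h1 h2 h3 h4]]] := IH a ps Qa Ql.
  by exists x, y; split => //; rewrite inE h1 orbT.
by exists c, a; rewrite inE eqxx.
Qed.

Lemma path_in (A : {set T}) c s : path (fun u v => e u v && (v \in A)) c s -> c \in A ->
  forall w, w \in c :: s -> w \in A.
Proof.
elim: s c => [|a s IH] c /=; first by move=> _ cA w; rewrite inE => /eqP->.
move=> /andP[/andP[_ aA] ps] cA w; rewrite inE => /orP[/eqP->//|].
exact: IH.
Qed.

Lemma radius_cut t (A : {set T}) : radius_le e t A -> A != set0 /\ cutconn e A.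
Proof.
move=> /existsP[c /andP[cA hc]]; split; first by apply/set0Pn; exists c.
have hp : forall y, y \in A -> exists s : seq T,
    path (fun u v => e u v && (v \in A)) c s /\ last c s = y.
  move=> y yA; move/forallP: hc => /(_ y); rewrite yA /= => /existsP[n /existsP[s /andP[ps /eqP ls]]].
  by exists s.
move=> X XA Xn0 XnA.
case: (boolP (c \in X)) => cX.
- have [y yA yX] : exists2 y, y \in A & y \notin X.
    by move: XnA; rewrite eqEsubset XA /= => /subsetPn[y yA yX]; exists y.
  have [s [ps ls]] := hp y yA.
  have Ql : ~~ (mem X) (last c s) by rewrite ls.
  have [x [y' [h1 h2 h3 /andP[h4 h5]]]] := crossing (Q := mem X) ps cX Ql.
  by exists x, y'.
- have [y yX] := set0Pn _ Xn0.
  have [s [ps ls]] := hp y (subsetP XA y yX).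
  have Ql : ~~ [predC X] (last c s) by rewrite /= ls negbK.
  have [x [y' [h1 h2 h3 /andP[h4 h5]]]] := crossing (Q := [predC X]) ps cX Ql.
  exists y', x; split => //; first by move: h3; rewrite /= negbK.
    exact: (path_in ps cA h1).
  by rewrite esym.
Qed.
End Final.

Lemma minor_sym (T : finType) (e : rel T) : symmetric e -> symmetric (minor_rel e).
Proof.
move=> esym A B; rewrite /minor_rel eq_sym; congr (_ && _).
exact: (adj_sym esym A B).
Qed.

Lemma ccn_ge1 (V : finType) (r : rel V) (S : {set V}) : S != set0 -> 0 < clique_cover_number r S.
Proof.
move=> /set0Pn[x xS]; rewrite /clique_cover_number.
apply: (big_ind (fun n => 0 < n)).
- by apply/card_gt0P; exists x.
- by move=> a b; rewrite leq_min => -> ->.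
- move=> Q /andP[/and3P[/eqP cQ _ _] _]; apply/card_gt0P.
  by move: xS; rewrite -cQ => /bigcupP[B BQ _]; exists B.
Qed.

Lemma bigmin_le_seq (I : eqType) (r : seq I) (P : pred I) (F : I -> nat) d j :
  j \in r -> P j -> \big[minn/d]_(i <- r | P i) F i <= F j.
Proof.
elim: r => [|a r IH] //; rewrite inE big_cons => /orP[/eqP<- ->|jr Pj].
  exact: geq_minl.
case: (P a); last exact: IH.
by apply: leq_trans (geq_minr _ _) (IH jr Pj).
Qed.

Lemma bigmin_le (I : finType) (P : pred I) (F : I -> nat) d j :
  P j -> \big[minn/d]_(i | P i) F i <= F j.
Proof. by move=> Pj; apply: bigmin_le_seq Pj; rewrite mem_index_enum. Qed.

Lemma ccn_clique (V : finType) (r : rel V) (S : {set V}) : S != set0 -> is_clique r S ->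
  clique_cover_number r S <= 1.
Proof.
move=> Sn0 cS; rewrite /clique_cover_number.
apply: leq_trans (bigmin_le _ _ (j := [set S]) _) _; last by rewrite cards1.
rewrite /partition cover1 eqxx trivIset1 inE eq_sym Sn0 /=.
by apply/forallP => K; apply/implyP; rewrite inE => /eqP->.
Qed.

Lemma red1 (T : finType) (e : rel T) t (P : {set {set T}}) : symmetric e -> irreflexive e -> chordal e ->
  shallow_family e t P -> P != set0 -> reduced_nbhd_ccn (minor_rel e) P = 1.
Proof.
move=> esym eirr chd /andP[tP /forallP hr] Pn0.
have hg : forall A, A \in P -> A != set0 /\ cutconn e A.
  by move=> A AP; apply: (radius_cut esym (t := t)); move: (hr A); rewrite AP.
have hd : forall A B, A \in P -> B \in P -> A != B -> [disjoint A & B].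
  by move=> A B AP BP AB; move/trivIsetP: tP; apply.
have [A0 [A0P hA0]] := family_simp esym eirr chd (g := id) (leqnn _) Pn0 hg hd.
have nb0 : forall x, x \in P -> closed_nbhd (minor_rel e) P x != set0.
  by move=> x xP; apply/set0Pn; exists x; rewrite inE xP eqxx.
apply/eqP; rewrite eqn_leq; apply/andP; split.
- rewrite /reduced_nbhd_ccn; apply: leq_trans (bigmin_le _ _ (j := A0) A0P) _.
  apply: ccn_clique; first exact: nb0.
  apply/forallP => x; apply/implyP; rewrite inE => /andP[xP hx].
  apply/forallP => y; apply/implyP; rewrite inE => /andP[yP hy]; apply/implyP => xy.
  have msym := minor_sym esym.
  case/orP: hx => [/eqP xA|/andP[xA ax]].
    rewrite xA; case/orP: hy => [/eqP yA|->//]; by move: xy; rewrite xA yA eqxx.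
  case/orP: hy => [/eqP yA|/andP[yA ay]].
    by rewrite msym yA /minor_rel xA.
  rewrite /minor_rel xy /=.
  by apply: (hA0 x y) => //; rewrite eq_sym.
- rewrite /reduced_nbhd_ccn; apply: (big_ind (fun n => 0 < n)).
  + by move/set0Pn: Pn0 => [x xP]; apply/card_gt0P; exists x.
  + by move=> a b; rewrite leq_min => -> ->.
  + by move=> x xP; apply: ccn_ge1; exact: nb0.
Qed.

Theorem theorem2p1 (T : finType) (e : rel T) (t : nat) :
  symmetric e -> irreflexive e -> 0 < #|T| -> chordal e -> hat_beta e t = 1.
Proof.
move=> esym eirr hT chd.
pose P0 := [set [set x] | x : T].
have [x0 _] := card_gt0P hT.
have P0s : shallow_family e t P0.
  apply/andP; split.
    apply/trivIsetP => A B /imsetP[x _ ->] /imsetP[y _ ->] xy.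
    rewrite disjoints1 inE; apply/eqP => h; by rewrite h eqxx in xy.
  apply/forallP => A; apply/implyP => /imsetP[x _ ->].
  apply/existsP; exists x; rewrite set11 /=; apply/forallP => y; apply/implyP; rewrite inE => /eqP->.
  apply/existsP; exists ord0; apply/existsP; exists [tuple]; by rewrite /= eqxx.
have P0n0 : P0 != set0 by apply/set0Pn; exists [set x0]; apply/imsetP; exists x0.
apply/eqP; rewrite eqn_leq; apply/andP; split.
- apply/bigmax_leqP => P /andP[hP Pn0]; by rewrite (red1 esym eirr chd hP Pn0).
- rewrite -{1}(red1 esym eirr chd P0s P0n0).
  by apply: leq_bigmax_cond; rewrite P0s P0n0.
Qed.
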